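(* Let $X$ be a topological space, $Y$ a compact metric space, $A$ a finite subset of $Y$ and $\epsilon>0$. Let $Z$ denote either $U_\epsilon(Y)$ or $\mathcal{U}_\epsilon(A)$. If $f,g:X\to Z$ are continuous and the map $f\cup g:X\to Z$, $(f\cup g)(x)=f(x)\cup g(x)$, is well-defined (i.e. $f(x)\cup g(x)\in Z$ for all $x$), then $f\cup g$ is continuous and homotopic to both $f$ and $g$.
   Context: For a compact metric space $Y$, $2^Y$ is the set of nonempty closed subsets of $Y$ with the upper semifinite topology, whose base consists of the sets $B(U)=\{C\in 2^Y\mid C\subset U\}$ for $U\subseteq Y$ open. $U_\epsilon(Y)=\{C\in 2^Y\mid \mathrm{diam}(C)<\epsilon\}$ with the subspace topology. For finite $A\subset Y$, $\mathcal{U}_\epsilon(A)=\{C\subseteq A\mid C\neq\emptyset,\ \mathrm{diam}(C)<\epsilon\}$, a finite poset under inclusion regarded as a finite $T_0$ space whose open sets are the down-sets. *)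

(* Defs.v *)
From HB Require Import structures.
From mathcomp Require Import all_boot all_order all_algebra.
From mathcomp Require Import all_classical all_reals all_analysis.
Set Implicit Arguments. Unset Strict Implicit. Unset Printing Implicit Defensive.
Import Order.TTheory GRing.Theory Num.Theory.
Import numFieldTopology.Exports.
Local Open Scope classical_set_scope.
Local Open Scope ring_scope.

Section Defs.
Context {R : realType} {Y : metricType R}.

Definition diam (C : set Y) : R :=
  sup [set mdist p.1 p.2 | p in C `*` C].

Record Ueps (eps : R) := MkUeps {
  ue_set : set Y;
  ue_ne : ue_set !=set0;
  ue_closed : closed ue_set;
  ue_diam : diam ue_set < eps }.

Record UepsA (A : set Y) (eps : R) := MkUepsA {
  uf_set : set Y;
  uf_ne : uf_set !=set0;
  uf_sub : uf_set `<=` A;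
  uf_diam : diam uf_set < eps }.
End Defs.

HB.instance Definition _ (R : realType) (Y : metricType R) (eps : R) :=
  gen_eqMixin (@Ueps R Y eps).
HB.instance Definition _ (R : realType) (Y : metricType R) (eps : R) :=
  gen_choiceMixin (@Ueps R Y eps).
HB.instance Definition _ (R : realType) (Y : metricType R) A (eps : R) :=
  gen_eqMixin (@UepsA R Y A eps).
HB.instance Definition _ (R : realType) (Y : metricType R) A (eps : R) :=
  gen_choiceMixin (@UepsA R Y A eps).

(* upper semifinite topology (restricted to U_eps(Y)): generated by the
   basic sets B(U) = [set C | C `<=` U], U open in Y *)
Definition usf_base (R : realType) (Y : metricType R) (eps : R)
  (U : set Y) : set (@Ueps R Y eps) := [set C | ue_set C `<=` U].

HB.instance Definition _ (R : realType) (Y : metricType R) (eps : R) :=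
  @isSubBaseTopological.Build (@Ueps R Y eps) (set Y) open (@usf_base R Y eps).

(* finite T0 space: open sets are the down-sets for inclusion *)
Definition downset (R : realType) (Y : metricType R) A (eps : R)
  (W : set (@UepsA R Y A eps)) : Prop :=
  forall C C', W C -> uf_set C' `<=` uf_set C -> W C'.

HB.instance Definition _ (R : realType) (Y : metricType R) A (eps : R) :=
  @isSubBaseTopological.Build (@UepsA R Y A eps) (set (@UepsA R Y A eps))
    (@downset R Y A eps) id.

Definition homotopic (R : realType) (X Z : topologicalType) (f g : X -> Z) :=
  exists H : X * R -> Z,
    {within [set: X] `*` [set t : R | 0 <= t <= 1], continuous H} /\
    (forall x, H (x, 0) = f x) /\ (forall x, H (x, 1) = g x).

(* Main.v *)
Require Import Defs.
From HB Require Import structures.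
From mathcomp Require Import all_boot all_order all_algebra.
From mathcomp Require Import all_classical all_reals all_analysis.
Import Order.TTheory GRing.Theory Num.Theory.
Import numFieldTopology.Exports.
Local Open Scope classical_set_scope.
Local Open Scope ring_scope.

Section Gen.
Variables (R : realType) (Y : metricType R) (X T : topologicalType) (S : T -> set Y).
Hypothesis HW : forall c O, nbhs c O -> exists2 W, open W /\ W c &
  [/\ W `<=` O, (forall a b, S a `<=` S b -> W b -> W a) &
      (forall a b d, S d = S a `|` S b -> W a -> W b -> W d)].

Lemma gen_cont (f g h : X -> T) : continuous f -> continuous g ->
  (forall x, S (h x) = S (f x) `|` S (g x)) -> continuous h.
Proof.
move=> cf cg eh x O hO.
have [W [oW Wc] [WO Wd Wu]] := HW _ _ hO.
have Wf : W (f x) by apply: Wd Wc; rewrite eh; exact: subsetUl.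
have Wg : W (g x) by apply: Wd Wc; rewrite eh; exact: subsetUr.
have nf : nbhs x (f @^-1` W) by apply: cf; apply: open_nbhs_nbhs.
have ng : nbhs x (g @^-1` W) by apply: cg; apply: open_nbhs_nbhs.
apply: filterS (filterI nf ng) => y [fy gy]; apply: WO; exact: Wu fy gy.
Qed.

Lemma gen_homot (f g h : X -> T) : continuous f -> continuous g ->
  (forall x, S (h x) = S (f x) `|` S (g x)) -> homotopic R h f.
Proof.
move=> cf cg eh.
have ch := @gen_cont f g h cf cg eh.
pose H := fun p : X * R => if p.2 <= 0 then h p.1 else f p.1.
exists H; split; last first.
  by split => x; rewrite /H /= ?lexx ?ler10.
apply: continuous_subspaceT => -[x t] O HO.
have [W [oW Wc] [WO Wd Wu]] := HW _ _ HO.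
case: (leP t 0) => t0.
  have Wh : W (h x) by move: Wc; rewrite /H /= t0.
  have nh : nbhs x (h @^-1` W) by apply: ch; apply: open_nbhs_nbhs.
  exists (h @^-1` W, setT) => /=; first by split => //; exact: filterT.
  move=> [y s] /= [Why _]; apply: WO; rewrite /H /=; case: ifP => _ //.
  by apply: Wd Why; rewrite eh; exact: subsetUl.
have Wf : W (f x) by move: Wc; rewrite /H /= leNgt t0.
have nf : nbhs x (f @^-1` W) by apply: cf; apply: open_nbhs_nbhs.
exists (f @^-1` W, [set s : R | 0 < s]) => /=.
  by split => //; apply: open_nbhs_nbhs; split => //; exact: open_gt.
move=> [y s] /= [Wfy s0]; apply: WO; by rewrite /H /= leNgt s0.
Qed.
End Gen.
Lemma HW_Ueps (R : realType) (Y : metricType R) (eps : R) (c : @Ueps R Y eps) O :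
  nbhs c O -> exists2 W : set (@Ueps R Y eps), open W /\ W c &
  [/\ W `<=` O, (forall a b, ue_set a `<=` ue_set b -> W b -> W a) &
      (forall a b d, ue_set d = ue_set a `|` ue_set b -> W a -> W b -> W d)].
Proof.
rewrite nbhsE => -[B [oB Bc] BO].
move: oB; rewrite /open /= => -[D' sD' eB].
move: Bc; rewrite -eB => -[i D'i ic].
have [F sF eI] := sD' i D'i.
exists i.
  split => //; rewrite /open /=; exists [set i]; last exact: bigcup_set1.
  by move=> j /= ->; exact: sD'.
split.
- by move=> z iz; apply: BO; rewrite -eB; exists i.
- move=> a b ab; rewrite -eI => Hb U FU; exact: subset_trans ab (Hb U FU).
- move=> a b d ed; rewrite -eI => Ha Hb U FU.
  have Ha2 : ue_set a `<=` U := Ha U FU.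
  have Hb2 : ue_set b `<=` U := Hb U FU.
  by change (ue_set d `<=` U); rewrite ed => y [/Ha2|/Hb2].
Qed.

Lemma HW_UepsA (R : realType) (Y : metricType R) A (eps : R) (c : @UepsA R Y A eps) O :
  nbhs c O -> exists2 W : set (@UepsA R Y A eps), open W /\ W c &
  [/\ W `<=` O, (forall a b, uf_set a `<=` uf_set b -> W b -> W a) &
      (forall a b d, uf_set d = uf_set a `|` uf_set b -> W a -> W b -> W d)].
Proof.
rewrite nbhsE => -[B [oB Bc] BO].
move: oB; rewrite /open /= => -[D' sD' eB].
move: Bc; rewrite -eB => -[i D'i ic].
have [F sF eI] := sD' i D'i.
pose W := [set z : @UepsA R Y A eps | uf_set z `<=` uf_set c].
have ds : downset W by move=> z z' Wz zz'; exact: subset_trans zz' Wz.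
have Wi : W `<=` i.
  move=> z Wz; rewrite -eI => U FU.
  have dU : downset U by move: (sF U FU); rewrite inE.
  have Uc : U c by move: ic; rewrite -eI => /(_ U FU).
  exact: dU Uc Wz.
exists W.
  split => //; rewrite /open /=; exists [set W]; last exact: bigcup_set1.
  by move=> j ->; exact: (@finI_from1 _ _ _ id).
split.
- by move=> z /Wi iz; apply: BO; rewrite -eB; exists i.
- move=> a b ab Wb; exact: subset_trans ab Wb.
- move=> a b d ed Wa Wb; by rewrite /W /= ed => y [/Wa|/Wb].
Qed.

Theorem lemma4p2 (R : realType) (X : topologicalType) (Y : metricType R)
  (hY : compact [set: Y]) (A : set Y) (hA : finite_set A)
  (eps : R) (heps : 0 < eps) :
  (forall f g h : X -> @Ueps R Y eps,
      continuous f -> continuous g ->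
      (forall x, ue_set (h x) = ue_set (f x) `|` ue_set (g x)) ->
      [/\ continuous h, homotopic R h f & homotopic R h g]) /\
  (forall f g h : X -> @UepsA R Y A eps,
      continuous f -> continuous g ->
      (forall x, uf_set (h x) = uf_set (f x) `|` uf_set (g x)) ->
      [/\ continuous h, homotopic R h f & homotopic R h g]).
Proof.
split=> f g h cf cg eh.
- have eh' : forall x, ue_set (h x) = ue_set (g x) `|` ue_set (f x).
    by move=> x; rewrite setUC.
  have HW := @HW_Ueps R Y eps.
  split; [exact: gen_cont HW _ _ _ cf cg eh
         |exact: gen_homot HW _ _ _ cf cg eh
         |exact: gen_homot HW _ _ _ cg cf eh'].
- have eh' : forall x, uf_set (h x) = uf_set (g x) `|` uf_set (f x).
    by move=> x; rewrite setUC.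
  have HW := @HW_UepsA R Y A eps.
  split; [exact: gen_cont HW _ _ _ cf cg eh
         |exact: gen_homot HW _ _ _ cf cg eh
         |exact: gen_homot HW _ _ _ cg cf eh'].
Qed.
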